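(* Let $X$ be any object of $\mathsf{SquaMS}$, let $m\in M$ and $x,y\in X$. Then every finite path $(m,x)=z_0,z_1,\dots,z_k=(m,y)$ in $M\times X$ has score at least $\frac13 d_X(x,y)$.
   Context: Let $M_0=\{(r,s)\in[0,1]^2: r\in\{0,1\}\text{ or } s\in\{0,1\}\}$. A square metric space is a pair $(X,S_X)$ with $X$ a metric space with all distances at most $2$ and $S_X\colon M_0\to X$ injective such that (sq1) for $i\in\{0,1\}$, $r,s\in[0,1]$: $d_X(S_X(i,r),S_X(i,s))=|s-r|$ and $d_X(S_X(r,i),S_X(s,i))=|s-r|$; (sq2) $d_X(S_X(r,s),S_X(t,u))\ge|r-t|+|s-u|$; $\mathsf{SquaMS}$ is the category of these. Let $N=\{0,1,2\}^2$, $M=N\setminus\{(1,1)\}$, also viewed as points of $\mathbb{R}^2$. Let $\sim$ be the equivalence relation on $M\times X$ generated by $(m,S_X(p))\sim(n,S_X(q))$ whenever $m,n\in M$ differ by exactly $1$ in exactly one coordinate and $(m+p)/3=(n+q)/3$. On $M\times X$ let $d((a,u),(b,v))=\frac13 d_X(u,v)$ if $a=b$ and $2$ otherwise. The score of a finite path $z_0,\dots,z_k$ in $M\times X$ is $\sum_{i<k}c_i$, where $c_i=0$ if $z_i\sim z_{i+1}$ and $c_i=d(z_i,z_{i+1})$ otherwise. *)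

(* Defs.v *)
From Stdlib Require Import Reals Lra Lia Relations ClassicalEpsilon.
Open Scope R_scope.

Definition inM0 (r s : R) : Prop :=
  0 <= r <= 1 /\ 0 <= s <= 1 /\ (r = 0 \/ r = 1 \/ s = 0 \/ s = 1).

(* Objects of SquaMS: a metric space with all distances <= 2 together with
   S : M_0 -> X (given as a function R -> R -> X, only its values on M_0
   matter) injective on M_0 and satisfying (sq1), (sq2). *)
Record SquaMS := {
  carrier :> Type;
  dX : carrier -> carrier -> R;
  dX_nonneg : forall x y, 0 <= dX x y;
  dX_eq0 : forall x y, dX x y = 0 <-> x = y;
  dX_sym : forall x y, dX x y = dX y x;
  dX_tri : forall x y z, dX x z <= dX x y + dX y z;
  dX_le2 : forall x y, dX x y <= 2;
  SX : R -> R -> carrier;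
  S_inj : forall r s t u, inM0 r s -> inM0 t u -> SX r s = SX t u -> r = t /\ s = u;
  sq1 : forall i r s, (i = 0 \/ i = 1) -> 0 <= r <= 1 -> 0 <= s <= 1 ->
        dX (SX i r) (SX i s) = Rabs (s - r) /\ dX (SX r i) (SX s i) = Rabs (s - r);
  sq2 : forall r s t u, inM0 r s -> inM0 t u ->
        dX (SX r s) (SX t u) >= Rabs (r - t) + Rabs (s - u)
}.

Definition inMb (m : nat * nat) : bool :=
  (Nat.leb (fst m) 2 && Nat.leb (snd m) 2 &&
   negb (Nat.eqb (fst m) 1 && Nat.eqb (snd m) 1))%bool.

Definition M : Type := { m : nat * nat | inMb m = true }.
Definition Mx (m : M) : nat := fst (proj1_sig m).
Definition My (m : M) : nat := snd (proj1_sig m).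

Definition adjacent (m n : M) : Prop :=
  ((Mx m = Datatypes.S (Mx n) \/ Mx n = Datatypes.S (Mx m)) /\ My m = My n) \/
  ((My m = Datatypes.S (My n) \/ My n = Datatypes.S (My m)) /\ Mx m = Mx n).

Section Glue.
Variable X : SquaMS.

Definition gen_rel (z w : M * X) : Prop :=
  exists (m n : M) (p1 p2 q1 q2 : R),
    adjacent m n /\ inM0 p1 p2 /\ inM0 q1 q2 /\
    z = (m, SX X p1 p2) /\ w = (n, SX X q1 q2) /\
    (INR (Mx m) + p1) / 3 = (INR (Mx n) + q1) / 3 /\
    (INR (My m) + p2) / 3 = (INR (My n) + q2) / 3.

Definition glue_equiv : M * X -> M * X -> Prop :=
  clos_refl_sym_trans (M * X) gen_rel.

Definition dMX (z w : M * X) : R :=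
  if (Nat.eqb (Mx (fst z)) (Mx (fst w)) && Nat.eqb (My (fst z)) (My (fst w)))%bool
  then dX X (snd z) (snd w) / 3 else 2.

Definition step_cost (z w : M * X) : R :=
  if excluded_middle_informative (glue_equiv z w) then 0 else dMX z w.

Fixpoint score (z : nat -> M * X) (k : nat) : R :=
  match k with
  | O => 0
  | Datatypes.S k' => score z k' + step_cost (z k') (z k)
  end.
End Glue.

(* Main.v *)
Require Import Defs.
From Stdlib Require Import Reals Lra Lia Relations ClassicalEpsilon.
Open Scope R_scope.

Ltac rabs_all :=
  repeat match goal with
  | |- context [Rabs ?a] =>
      let H := fresh in destruct (Rcase_abs a) as [H|H];
      [rewrite (Rabs_left a H) | rewrite (Rabs_right a H)]
  end.

Ltac rmin_all :=
  repeat match goal with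
  | |- context [Rmin ?a ?b] =>
      let H := fresh in destruct (Rle_dec a b) as [H|H];
      [rewrite (Rmin_left a b H) | rewrite (Rmin_right a b) by lra]
  end.

Lemma abs_bounds t : - Rabs t <= t <= Rabs t.
Proof. rabs_all; lra. Qed.

Lemma abs_le_inv a c : Rabs a <= c -> - c <= a <= c.
Proof. rabs_all; lra. Qed.

Lemma Rmin_lip a b a' b' e : Rabs (a - a') <= e -> Rabs (b - b') <= e ->
  Rabs (Rmin a b - Rmin a' b') <= e.
Proof.
  intros H1 H2; apply abs_le_inv in H1; apply abs_le_inv in H2.
  apply Rabs_le. rmin_all; lra.
Qed.

Definition cl (v : R) : R := Rmax 0 (Rmin 1 v).

Lemma cl_cases v : (v <= 0 /\ cl v = 0) \/ (0 <= v <= 1 /\ cl v = v) \/ (1 <= v /\ cl v = 1).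
Proof.
  unfold cl, Rmax, Rmin. repeat destruct Rle_dec; lra.
Qed.

Lemma cl_range v : 0 <= cl v <= 1.
Proof. destruct (cl_cases v) as [[? ->]|[[? ->]|[? ->]]]; lra. Qed.

Lemma cl_id v : 0 <= v <= 1 -> cl v = v.
Proof. intros; destruct (cl_cases v) as [[? ->]|[[? ->]|[? ->]]]; lra. Qed.

Lemma cl_lip v v' : Rabs (cl v - cl v') + Rabs (Rabs (v - cl v) - Rabs (v' - cl v')) <= Rabs (v - v').
Proof.
  destruct (cl_cases v) as [[? ->]|[[? ->]|[? ->]]];
  destruct (cl_cases v') as [[? ->]|[[? ->]|[? ->]]]; rabs_all; lra.
Qed.

Lemma cl_far v : (v >= 2 \/ v <= -1) -> Rabs (v - cl v) >= 1.
Proof.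
  intros; destruct (cl_cases v) as [[? ->]|[[? ->]|[? ->]]]; rabs_all; lra.
Qed.

Lemma abs_lip u u' : Rabs (Rabs u - Rabs u') <= Rabs (u - u').
Proof. rabs_all; lra. Qed.

Lemma shape tL tR tB tT k :
  tL >= k -> tR >= k -> tB >= k -> tT >= k ->
  (tL = k \/ tR = k \/ tB = k \/ tT = k) -> k <= 2 ->
  Rmin (Rmin (Rmin 2 tL) (Rmin 2 tR)) (Rmin (Rmin 2 tB) (Rmin 2 tT)) = k.
Proof.
  intros. unfold Rmin; repeat destruct Rle_dec; lra.
Qed.

Definition kf (X : SquaMS) (x : X) (p1 p2 : R) : R := Rmin 2 (dX X x (SX X p1 p2)).

Lemma kf_range X x p1 p2 : 0 <= kf X x p1 p2 <= 2.
Proof. unfold kf; pose proof (dX_nonneg X x (SX X p1 p2)); rmin_all; lra. Qed.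

Lemma dmin_lip (X : SquaMS) (x a b : X) : Rabs (Rmin 2 (dX X x a) - Rmin 2 (dX X x b)) <= dX X a b.
Proof.
  pose proof (dX_tri X x a b); pose proof (dX_tri X x b a); pose proof (dX_sym X a b).
  pose proof (dX_nonneg X a b).
  apply Rabs_le. rmin_all; lra.
Qed.

Lemma kf_lip X x a1 a2 b1 b2 : Rabs (kf X x a1 a2 - kf X x b1 b2) <= dX X (SX X a1 a2) (SX X b1 b2).
Proof. apply dmin_lip. Qed.

Definition KL X x u v := kf X x 0 (cl v) + Rabs u + Rabs (v - cl v).
Definition KR X x u v := kf X x 1 (cl v) + Rabs (u - 1) + Rabs (v - cl v).
Definition KB X x u v := kf X x (cl u) 0 + Rabs v + Rabs (u - cl u).
Definition KT X x u v := kf X x (cl u) 1 + Rabs (v - 1) + Rabs (u - cl u).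

Lemma side_d1 (X : SquaMS) i s t : (i = 0 \/ i = 1) -> 0 <= s <= 1 -> 0 <= t <= 1 ->
  dX X (SX X i s) (SX X i t) = Rabs (s - t).
Proof. intros. destruct (sq1 X i s t) as [Hq _]; auto. rewrite Hq, Rabs_minus_sym; auto. Qed.
Lemma side_d2 (X : SquaMS) i s t : (i = 0 \/ i = 1) -> 0 <= s <= 1 -> 0 <= t <= 1 ->
  dX X (SX X s i) (SX X t i) = Rabs (s - t).
Proof. intros. destruct (sq1 X i s t) as [_ Hq]; auto. rewrite Hq, Rabs_minus_sym; auto. Qed.

Lemma gen_lip (k k' a b c d u u' v v' : R) :
  Rabs (k - k') <= Rabs (a - b) ->
  Rabs (a - b) + Rabs (Rabs (c) - Rabs (d)) <= Rabs (v - v') ->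
  Rabs (Rabs u - Rabs u') <= Rabs (u - u') ->
  Rabs ((k + Rabs u + Rabs c) - (k' + Rabs u' + Rabs d)) <= Rabs (u - u') + Rabs (v - v').
Proof.
  intros H1 H2 H3. apply abs_le_inv in H1. apply abs_le_inv in H3.
  pose proof (abs_bounds (Rabs c - Rabs d)).
  apply Rabs_le. lra.
Qed.

Lemma gen_lip2 (k k' a b c d u u' v v' : R) :
  Rabs (k - k') <= Rabs (a - b) ->
  Rabs (a - b) + Rabs (Rabs (c) - Rabs (d)) <= Rabs (u - u') ->
  Rabs (Rabs v - Rabs v') <= Rabs (v - v') ->
  Rabs ((k + Rabs v + Rabs c) - (k' + Rabs v' + Rabs d)) <= Rabs (u - u') + Rabs (v - v').
Proof.
  intros H1 H2 H3. apply abs_le_inv in H1. apply abs_le_inv in H3.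
  pose proof (abs_bounds (Rabs c - Rabs d)).
  apply Rabs_le. lra.
Qed.

Lemma KL_lip X x u v u' v' : Rabs (KL X x u v - KL X x u' v') <= Rabs (u - u') + Rabs (v - v').
Proof.
  unfold KL. apply (gen_lip _ _ (cl v) (cl v')).
  - eapply Rle_trans; [apply kf_lip|]. rewrite side_d1; pose proof (cl_range v); pose proof (cl_range v'); lra.
  - apply cl_lip.
  - apply abs_lip.
Qed.
Lemma KR_lip X x u v u' v' : Rabs (KR X x u v - KR X x u' v') <= Rabs (u - u') + Rabs (v - v').
Proof.
  unfold KR. replace (Rabs (u - u')) with (Rabs ((u-1) - (u'-1))) by (f_equal; ring).
  apply (gen_lip _ _ (cl v) (cl v')).
  - eapply Rle_trans; [apply kf_lip|]. rewrite side_d1; pose proof (cl_range v); pose proof (cl_range v'); lra.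
  - apply cl_lip.
  - apply abs_lip.
Qed.
Lemma KB_lip X x u v u' v' : Rabs (KB X x u v - KB X x u' v') <= Rabs (u - u') + Rabs (v - v').
Proof.
  unfold KB. apply (gen_lip2 _ _ (cl u) (cl u')).
  - eapply Rle_trans; [apply kf_lip|]. rewrite side_d2; pose proof (cl_range u); pose proof (cl_range u'); lra.
  - apply cl_lip.
  - apply abs_lip.
Qed.
Lemma KT_lip X x u v u' v' : Rabs (KT X x u v - KT X x u' v') <= Rabs (u - u') + Rabs (v - v').
Proof.
  unfold KT. replace (Rabs (v - v')) with (Rabs ((v-1) - (v'-1))) by (f_equal; ring).
  apply (gen_lip2 _ _ (cl u) (cl u')).
  - eapply Rle_trans; [apply kf_lip|]. rewrite side_d2; pose proof (cl_range u); pose proof (cl_range u'); lra.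
  - apply cl_lip.
  - apply abs_lip.
Qed.

Lemma K_nonneg X x u v : 0 <= KL X x u v /\ 0 <= KR X x u v /\ 0 <= KB X x u v /\ 0 <= KT X x u v.
Proof.
  unfold KL, KR, KB, KT.
  repeat match goal with |- context [kf X x ?a ?b] => pose proof (kf_range X x a b); generalize dependent (kf X x a b); intros end.
  repeat split; rabs_all; lra.
Qed.

Definition allowL (m1 m2 a1 a2 : nat) : bool :=
  (Nat.leb 1 m1 && inMb ((m1 - 1)%nat, m2) && negb (Nat.ltb m1 a1))%bool.
Definition allowR (m1 m2 a1 a2 : nat) : bool :=
  (inMb (S m1, m2) && negb (Nat.ltb a1 m1))%bool.
Definition allowB (m1 m2 a1 a2 : nat) : bool :=
  (Nat.leb 1 m2 && inMb (m1, (m2 - 1)%nat) && negb (Nat.ltb m2 a2))%bool.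
Definition allowT (m1 m2 a1 a2 : nat) : bool :=
  (inMb (m1, S m2) && negb (Nat.ltb a2 m2))%bool.

Definition gate (b : bool) (r : R) : R := if b then r else 2.

Definition phi (X : SquaMS) (x : X) (m1 m2 a1 a2 : nat) (q1 q2 : R) : R :=
  let u := INR a1 + q1 - INR m1 in
  let v := INR a2 + q2 - INR m2 in
  Rmin (Rmin (Rmin 2 (gate (allowL m1 m2 a1 a2) (KL X x u v)))
             (Rmin 2 (gate (allowR m1 m2 a1 a2) (KR X x u v))))
       (Rmin (Rmin 2 (gate (allowB m1 m2 a1 a2) (KB X x u v)))
             (Rmin 2 (gate (allowT m1 m2 a1 a2) (KT X x u v)))).

Lemma gate_lip b r r' e : Rabs (r - r') <= e -> 0 <= e -> Rabs (gate b r - gate b r') <= e.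
Proof. destruct b; simpl; auto. intros. replace (2-2) with 0 by ring. rewrite Rabs_R0; lra. Qed.

Lemma min2_lip r r' e : Rabs (r - r') <= e -> 0 <= e -> Rabs (Rmin 2 r - Rmin 2 r') <= e.
Proof. intros. apply Rmin_lip; auto. replace (2-2) with 0 by ring. rewrite Rabs_R0; lra. Qed.

Lemma phi_lip X x m1 m2 a1 a2 q1 q2 q1' q2' :
  Rabs (phi X x m1 m2 a1 a2 q1 q2 - phi X x m1 m2 a1 a2 q1' q2') <= Rabs (q1 - q1') + Rabs (q2 - q2').
Proof.
  unfold phi.
  assert (E1 : Rabs (q1 - q1') = Rabs ((INR a1 + q1 - INR m1) - (INR a1 + q1' - INR m1))) by (f_equal; ring).
  assert (E2 : Rabs (q2 - q2') = Rabs ((INR a2 + q2 - INR m2) - (INR a2 + q2' - INR m2))) by (f_equal; ring).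
  assert (0 <= Rabs (q1 - q1') + Rabs (q2 - q2')) by (pose proof (Rabs_pos (q1-q1')); pose proof (Rabs_pos (q2-q2')); lra).
  apply Rmin_lip; apply Rmin_lip; apply min2_lip; auto; apply gate_lip; auto; rewrite E1, E2;
    first [apply KL_lip | apply KR_lip | apply KB_lip | apply KT_lip].
Qed.

Lemma phi_range X x m1 m2 a1 a2 q1 q2 : 0 <= phi X x m1 m2 a1 a2 q1 q2 <= 2.
Proof.
  unfold phi.
  destruct (K_nonneg X x (INR a1 + q1 - INR m1) (INR a2 + q2 - INR m2)) as (h1 & h2 & h3 & h4).
  repeat match goal with |- context [gate ?b ?r] => assert (0 <= gate b r) by (destruct b; simpl; lra);
     generalize dependent (gate b r); intros end.
  rmin_all; lra.
Qed.

(* McShane extension *)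
Definition Eset (X : SquaMS) (f : R -> R -> R) (w : X) (t : R) : Prop :=
  exists q1 q2, inM0 q1 q2 /\ t = - (Rabs (f q1 q2) + dX X w (SX X q1 q2)).

Lemma Eset_bound X f w : bound (Eset X f w).
Proof.
  exists 0. intros t (q1 & q2 & _ & ->).
  pose proof (Rabs_pos (f q1 q2)); pose proof (dX_nonneg X w (SX X q1 q2)); lra.
Qed.

Lemma inM0_00 : inM0 0 0.
Proof. unfold inM0; lra. Qed.

Lemma Eset_ne X f w : exists t, Eset X f w t.
Proof.
  eexists. exists 0, 0. split; [apply inM0_00 | reflexivity].
Qed.

Definition Ext (X : SquaMS) (f : R -> R -> R) (w : X) : R :=
  - proj1_sig (completeness _ (Eset_bound X f w) (Eset_ne X f w)).

Lemma Ext_le X f w q1 q2 : inM0 q1 q2 -> Ext X f w <= Rabs (f q1 q2) + dX X w (SX X q1 q2).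
Proof.
  intros H. unfold Ext. destruct completeness as [l [Hu Hl]]; simpl.
  assert (- (Rabs (f q1 q2) + dX X w (SX X q1 q2)) <= l) by (apply Hu; exists q1, q2; auto).
  lra.
Qed.

Lemma Ext_ge X f w c : (forall q1 q2, inM0 q1 q2 -> c <= Rabs (f q1 q2) + dX X w (SX X q1 q2)) ->
  c <= Ext X f w.
Proof.
  intros H. unfold Ext. destruct completeness as [l [Hu Hl]]; simpl.
  assert (l <= - c). { apply Hl. intros t (q1 & q2 & Hq & ->). specialize (H q1 q2 Hq). lra. }
  lra.
Qed.

Lemma Ext_lip X f w w' : Ext X f w <= Ext X f w' + dX X w w'.
Proof.
  assert (Ext X f w - dX X w w' <= Ext X f w'); [|lra].
  apply Ext_ge. intros q1 q2 Hq. pose proof (Ext_le X f w q1 q2 Hq).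
  pose proof (dX_tri X w w' (SX X q1 q2)). lra.
Qed.

Lemma Ext_at X f q1 q2 :
  (forall a1 a2 b1 b2, inM0 a1 a2 -> inM0 b1 b2 ->
     Rabs (f a1 a2) <= Rabs (f b1 b2) + dX X (SX X a1 a2) (SX X b1 b2)) ->
  inM0 q1 q2 -> Ext X f (SX X q1 q2) = Rabs (f q1 q2).
Proof.
  intros Hf Hq. apply Rle_antisym.
  - pose proof (Ext_le X f (SX X q1 q2) q1 q2 Hq).
    rewrite (proj2 (dX_eq0 X _ _) eq_refl) in H. lra.
  - apply Ext_ge. intros b1 b2 Hb. apply Hf; auto.
Qed.

Lemma sq2' (X : SquaMS) a1 a2 b1 b2 : inM0 a1 a2 -> inM0 b1 b2 ->
  Rabs (a1 - b1) + Rabs (a2 - b2) <= dX X (SX X a1 a2) (SX X b1 b2).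
Proof. intros. pose proof (sq2 X a1 a2 b1 b2 H H0). lra. Qed.

Lemma Ext_phi X x m1 m2 a1 a2 q1 q2 : inM0 q1 q2 ->
  Ext X (phi X x m1 m2 a1 a2) (SX X q1 q2) = phi X x m1 m2 a1 a2 q1 q2.
Proof.
  intros Hq. rewrite Ext_at; auto.
  - pose proof (phi_range X x m1 m2 a1 a2 q1 q2). rewrite Rabs_right; lra.
  - intros. pose proof (phi_range X x m1 m2 a1 a2 a0 a3).  pose proof (phi_range X x m1 m2 a1 a2 b1 b2).
    rewrite !Rabs_right by lra.
    pose proof (phi_lip X x m1 m2 a1 a2 a0 a3 b1 b2). apply abs_le_inv in H3.
    pose proof (sq2' X a0 a3 b1 b2 H H0). lra.
Qed.

Definition adjN (m1 m2 n1 n2 : nat) : Prop :=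
  ((m1 = S n1 \/ n1 = S m1) /\ m2 = n2) \/ ((m2 = S n2 \/ n2 = S m2) /\ m1 = n1).

Lemma inMb_cases a b : inMb (a, b) = true ->
  (a = 0 /\ b = 0 \/ a = 0 /\ b = 1 \/ a = 0 /\ b = 2 \/ a = 1 /\ b = 0 \/
   a = 1 /\ b = 2 \/ a = 2 /\ b = 0 \/ a = 2 /\ b = 1 \/ a = 2 /\ b = 2)%nat.
Proof.
  destruct a as [|[|[|a]]]; destruct b as [|[|[|b]]]; simpl; intros; try discriminate; lia.
Qed.

Ltac enumM H := apply inMb_cases in H; decompose [or and] H; clear H; subst.

Lemma Rabs0 : Rabs 0 = 0. Proof. apply Rabs_R0. Qed.

Lemma KL_ge X x p1 p2 : 0 <= p1 <= 1 -> 0 <= p2 <= 1 -> (p1 = 0 \/ p2 = 0 \/ p2 = 1) ->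
  KL X x p1 p2 >= kf X x p1 p2.
Proof.
  intros H1 H2 H3. unfold KL. rewrite cl_id by lra. replace (p2 - p2) with 0 by ring.
  rewrite Rabs0, (Rabs_right p1) by lra.
  destruct H3 as [->|H3]; [lra|].
  pose proof (kf_lip X x p1 p2 0 p2) as K. apply abs_le_inv in K.
  rewrite side_d2 in K by lra. rewrite Rabs_right in K by lra. lra.
Qed.

Lemma KR_ge X x p1 p2 : 0 <= p1 <= 1 -> 0 <= p2 <= 1 -> (p1 = 1 \/ p2 = 0 \/ p2 = 1) ->
  KR X x p1 p2 >= kf X x p1 p2.
Proof.
  intros H1 H2 H3. unfold KR. rewrite cl_id by lra. replace (p2 - p2) with 0 by ring.
  rewrite Rabs0, (Rabs_left1 (p1 - 1)) by lra.
  destruct H3 as [->|H3]; [lra|].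
  pose proof (kf_lip X x p1 p2 1 p2) as K. apply abs_le_inv in K.
  rewrite side_d2 in K by lra. rewrite Rabs_left1 in K by lra. lra.
Qed.

Lemma KB_ge X x p1 p2 : 0 <= p1 <= 1 -> 0 <= p2 <= 1 -> (p2 = 0 \/ p1 = 0 \/ p1 = 1) ->
  KB X x p1 p2 >= kf X x p1 p2.
Proof.
  intros H1 H2 H3. unfold KB. rewrite cl_id by lra. replace (p1 - p1) with 0 by ring.
  rewrite Rabs0, (Rabs_right p2) by lra.
  destruct H3 as [->|H3]; [lra|].
  pose proof (kf_lip X x p1 p2 p1 0) as K. apply abs_le_inv in K.
  rewrite side_d1 in K by lra. rewrite Rabs_right in K by lra. lra.
Qed.

Lemma KT_ge X x p1 p2 : 0 <= p1 <= 1 -> 0 <= p2 <= 1 -> (p2 = 1 \/ p1 = 0 \/ p1 = 1) ->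
  KT X x p1 p2 >= kf X x p1 p2.
Proof.
  intros H1 H2 H3. unfold KT. rewrite cl_id by lra. replace (p1 - p1) with 0 by ring.
  rewrite Rabs0, (Rabs_left1 (p2 - 1)) by lra.
  destruct H3 as [->|H3]; [lra|].
  pose proof (kf_lip X x p1 p2 p1 1) as K. apply abs_le_inv in K.
  rewrite side_d1 in K by lra. rewrite Rabs_left1 in K by lra. lra.
Qed.

Lemma KL_eq X x p1 p2 : p1 = 0 -> 0 <= p2 <= 1 -> KL X x p1 p2 = kf X x p1 p2.
Proof. intros -> H. unfold KL. rewrite cl_id by lra. replace (p2-p2) with 0 by ring. rewrite Rabs0. lra. Qed.
Lemma KR_eq X x p1 p2 : p1 = 1 -> 0 <= p2 <= 1 -> KR X x p1 p2 = kf X x p1 p2.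
Proof. intros -> H. unfold KR. rewrite cl_id by lra. replace (p2-p2) with 0 by ring. replace (1-1) with 0 by ring. rewrite Rabs0. lra. Qed.
Lemma KB_eq X x p1 p2 : p2 = 0 -> 0 <= p1 <= 1 -> KB X x p1 p2 = kf X x p1 p2.
Proof. intros -> H. unfold KB. rewrite cl_id by lra. replace (p1-p1) with 0 by ring. rewrite Rabs0. lra. Qed.
Lemma KT_eq X x p1 p2 : p2 = 1 -> 0 <= p1 <= 1 -> KT X x p1 p2 = kf X x p1 p2.
Proof. intros -> H. unfold KT. rewrite cl_id by lra. replace (p1-p1) with 0 by ring. replace (1-1) with 0 by ring. rewrite Rabs0. lra. Qed.

Ltac disj3 := first [left; lra | right; left; lra | right; right; lra].

Lemma glueC2 X x m1 m2 n1 n2 p1 p2 q1 q2 :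
  inMb (m1, m2) = true -> inMb (n1, n2) = true -> adjN m1 m2 n1 n2 ->
  inM0 p1 p2 -> inM0 q1 q2 ->
  INR m1 + p1 = INR n1 + q1 -> INR m2 + p2 = INR n2 + q2 ->
  phi X x m1 m2 n1 n2 q1 q2 = kf X x p1 p2.
Proof.
  intros Hm Hn Ha Hp Hq E1 E2. unfold phi.
  replace (INR n1 + q1 - INR m1) with p1 by lra.
  replace (INR n2 + q2 - INR m2) with p2 by lra.
  destruct Hp as (Hp1 & Hp2 & _). destruct Hq as (Hq1 & Hq2 & _).
  pose proof (kf_range X x p1 p2).
  unfold adjN in Ha.
  enumM Hm; enumM Hn; try (exfalso; lia); simpl in E1, E2 |- *;
  (apply shape; [ .. | lra ]);
  try lra;
  try (first [apply KL_ge | apply KR_ge | apply KB_ge | apply KT_ge]; try lra; disj3);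
  first [left; apply KL_eq; lra | right; left; apply KR_eq; lra
        | right; right; left; apply KB_eq; lra | right; right; right; apply KT_eq; lra].
Qed.

Lemma glueC1 X x m1 m2 a1 a2 b1 b2 p1 p2 q1 q2 :
  inMb (m1, m2) = true -> inMb (a1, a2) = true -> inMb (b1, b2) = true ->
  ~ (a1 = m1 /\ a2 = m2)%nat -> ~ (b1 = m1 /\ b2 = m2)%nat -> adjN a1 a2 b1 b2 ->
  inM0 p1 p2 -> inM0 q1 q2 ->
  INR a1 + p1 = INR b1 + q1 -> INR a2 + p2 = INR b2 + q2 ->
  phi X x m1 m2 a1 a2 p1 p2 = phi X x m1 m2 b1 b2 q1 q2.
Proof.
  intros Hm Ha Hb Na Nb Hadj Hp Hq E1 E2. unfold phi.
  replace (INR b1 + q1 - INR m1) with (INR a1 + p1 - INR m1) by lra.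
  replace (INR b2 + q2 - INR m2) with (INR a2 + p2 - INR m2) by lra.
  destruct Hp as (Hp1 & Hp2 & _). destruct Hq as (Hq1 & Hq2 & _).
  unfold adjN in Hadj.
  enumM Hm; enumM Ha; try (exfalso; lia); enumM Hb; try (exfalso; lia);
  simpl in E1, E2 |- *;
  f_equal; f_equal;
  first [ reflexivity
        | unfold KL, KR, KB, KT;
          repeat match goal with |- context [kf X x ?a ?b] => pose proof (kf_range X x a b); generalize dependent (kf X x a b); intros end;
          repeat match goal with |- context [cl ?v] => destruct (cl_cases v) as [[? ->]|[[? ->]|[? ->]]] end;
          rabs_all; rmin_all; lra ].
Qed.

Definition FF (X : SquaMS) (mm : M) (x : X) (z : M * X) : R :=
  if (Nat.eqb (Mx (fst z)) (Mx mm) && Nat.eqb (My (fst z)) (My mm))%bool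
  then Rmin 2 (dX X x (snd z))
  else Ext X (phi X x (Mx mm) (My mm) (Mx (fst z)) (My (fst z))) (snd z).

Lemma glueC2' X x m1 m2 n1 n2 p1 p2 q1 q2 :
  inMb (m1, m2) = true -> inMb (n1, n2) = true -> adjN m1 m2 n1 n2 ->
  inM0 p1 p2 -> inM0 q1 q2 ->
  INR m1 + p1 = INR n1 + q1 -> INR m2 + p2 = INR n2 + q2 ->
  phi X x m1 m2 n1 n2 q1 q2 = Rmin 2 (dX X x (SX X p1 p2)).
Proof. apply glueC2. Qed.

Lemma FF_gen X mm x z w : gen_rel X z w -> FF X mm x z = FF X mm x w.
Proof.
  intros (m0 & n0 & p1 & p2 & q1 & q2 & Hadj & Hp & Hq & -> & -> & E1 & E2).
  destruct m0 as [[a1 a2] Ha]. destruct n0 as [[b1 b2] Hb]. destruct mm as [[m1 m2] Hm].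
  unfold FF, adjacent, Mx, My in *; simpl in *.
  assert (F1 : INR a1 + p1 = INR b1 + q1) by lra.
  assert (F2 : INR a2 + p2 = INR b2 + q2) by lra.
  destruct (Nat.eqb_spec a1 m1); destruct (Nat.eqb_spec a2 m2);
  destruct (Nat.eqb_spec b1 m1); destruct (Nat.eqb_spec b2 m2); simpl;
  try (exfalso; lia);
  rewrite ?Ext_phi by assumption; subst.
  all: try solve [apply glueC1; try assumption; unfold adjN in *; lia].
  all: first [ symmetry; eapply glueC2' | eapply glueC2' ]; try eassumption; unfold adjN in *; try lia; lra.
Qed.

Lemma FF_equiv X mm x z w : glue_equiv X z w -> FF X mm x z = FF X mm x w.
Proof.
  intros H; induction H.
  - apply FF_gen; auto.
  - reflexivity.
  - auto.
  - congruence.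
Qed.

Lemma step X mm x z w : Rmin 2 (Rabs (FF X mm x z - FF X mm x w)) <= 3 * step_cost X z w.
Proof.
  unfold step_cost. destruct excluded_middle_informative as [G|G].
  - rewrite (FF_equiv X mm x z w G). replace (FF X mm x w - FF X mm x w) with 0 by ring.
    rewrite Rabs0. rmin_all; lra.
  - unfold dMX.
    destruct z as [[[a1 a2] Ha] u]. destruct w as [[[b1 b2] Hb] v].
    unfold FF, Mx, My; simpl.
    destruct (Nat.eqb_spec a1 b1); destruct (Nat.eqb_spec a2 b2); simpl;
      try (pose proof (Rmin_l 2 (Rabs (FF X mm x (exist _ (a1, a2) Ha, u) - FF X mm x (exist _ (b1, b2) Hb, v)))); unfold FF, Mx, My in *; simpl in *; lra).
    subst.
    pose proof (dX_nonneg X u v).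
    assert (Rabs ((if (Nat.eqb b1 (fst (proj1_sig mm)) && Nat.eqb b2 (snd (proj1_sig mm)))%bool
      then Rmin 2 (dX X x u) else Ext X (phi X x (fst (proj1_sig mm)) (snd (proj1_sig mm)) b1 b2) u) -
     (if (Nat.eqb b1 (fst (proj1_sig mm)) && Nat.eqb b2 (snd (proj1_sig mm)))%bool
      then Rmin 2 (dX X x v) else Ext X (phi X x (fst (proj1_sig mm)) (snd (proj1_sig mm)) b1 b2) v))
      <= dX X u v).
    { destruct (_ && _)%bool.
      - apply dmin_lip.
      - apply Rabs_le. pose proof (Ext_lip X (phi X x (fst (proj1_sig mm)) (snd (proj1_sig mm)) b1 b2) u v).
        pose proof (Ext_lip X (phi X x (fst (proj1_sig mm)) (snd (proj1_sig mm)) b1 b2) v u).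
        rewrite dX_sym in H1. lra. }
    eapply Rle_trans; [apply Rmin_r|]. lra.
Qed.

Lemma tri2 a b c : Rmin 2 (Rabs (a - c)) <= Rmin 2 (Rabs (a - b)) + Rmin 2 (Rabs (b - c)).
Proof. rabs_all; rmin_all; lra. Qed.

Theorem mainTheorem12 (X : SquaMS) (m : M) (x y : X)
  (z : nat -> M * X) (k : nat) :
  z 0%nat = (m, x) -> z k = (m, y) ->
  score X z k >= dX X x y / 3.
Proof.
  intros H0 Hk.
  assert (L : forall j, Rmin 2 (Rabs (FF X m x (z 0%nat) - FF X m x (z j))) <= 3 * score X z j).
  { induction j as [|j IH]; simpl.
    - replace (FF X m x (z 0%nat) - FF X m x (z 0%nat)) with 0 by ring. rewrite Rabs0. rmin_all; lra.
    - pose proof (step X m x (z j) (z (S j))).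
      pose proof (tri2 (FF X m x (z 0%nat)) (FF X m x (z j)) (FF X m x (z (S j)))). lra. }
  specialize (L k). rewrite H0, Hk in L. unfold FF in L; simpl in L.
  rewrite !Nat.eqb_refl in L; simpl in L.
  rewrite (proj2 (dX_eq0 X x x) eq_refl) in L.
  pose proof (dX_nonneg X x y). pose proof (dX_le2 X x y).
  rewrite (Rmin_right 2 0) in L by lra. rewrite (Rmin_right 2 (dX X x y)) in L by lra.
  replace (0 - dX X x y) with (- dX X x y) in L by ring. rewrite Rabs_Ropp, Rabs_right in L by lra.
  rewrite Rmin_right in L by lra. lra.
Qed.
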